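(* Let $\mathfrak g(V,\omega,D)$ be a generalized oscillator algebra satisfying (C1) $Q(x,y):=\omega(Dx,y)$ is positive definite, (C2) all functionals $\omega(x,\cdot)$, $x\in V$, are $Q$-continuous, and (C3) the map $\eta:V\to V_Q$, $Q(\eta(x),y)=\omega(x,y)$, is continuous, where $V_Q$ is the Hilbert completion of $(V,Q)$ containing $V$ as a dense subspace. Put $\kappa(x,y):=Q(\eta(x),\eta(y))$ for $x,y\in V$, and let $\overline D$ denote the closure in $V_Q$ of $D$ regarded as an unbounded operator with domain $V$. Then $\eta(V)$ lies in the domain of $\overline D$, the map $\eta:(V,\kappa)\to(\eta(V),Q)$ is isometric and extends to an isomorphism $\hat\eta:V_\kappa\to V_Q$ of real Hilbert spaces, and $\eta$ intertwines the unbounded operator $D:V\to V_\kappa$ with the operator $\overline D|_{\eta(V)}=\eta^{-1}:\eta(V)\to V\subseteq V_Q$. Moreover, the closure of $D$ in $V_\kappa$ is injective with dense range.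
   Context: $(V,\omega)$: real locally convex space with continuous non-degenerate alternating form $\omega$; $\gamma:\mathbb R\to\mathrm{Sp}(V,\omega)$ defines a smooth action, $D=\gamma'(0)$; $\mathfrak g(V,\omega,D)=\mathbb R\times V\times\mathbb R$ with bracket $[(z,v,t),(z',v',t')]=(\omega(v,v'),tDv'-t'Dv,0)$. A linear form $\beta$ on $V$ is $Q$-continuous if $\sup\{\beta(v):Q(v,v)\le1\}<\infty$. $V_\kappa$ denotes the Hilbert completion of $(V,\kappa)$. *)

(* Defs.v *)
From HB Require Import structures.
From mathcomp Require Import all_boot all_order all_algebra.
From mathcomp Require Import all_classical all_reals all_analysis.
Import Order.TTheory GRing.Theory Num.Theory.
Set Implicit Arguments. Unset Strict Implicit. Unset Printing Implicit Defensive.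
Local Open Scope classical_set_scope.
Local Open Scope ring_scope.

(** Bastiani C^k maps between (locally convex) topological vector spaces,
    defined via the tangent map: f is C^0 if continuous; f is C^(k+1) if it is
    continuous, all directional derivatives
      df(x,h) = lim_{t -> 0, t <> 0} t^-1 (f (x + t h) - f x)
    exist, and df : E x E -> F is C^k. *)
Fixpoint Ck (R : realType) (k : nat) : forall (E F : tvsType R), (E -> F) -> Prop :=
  match k with
  | 0 => fun E F f => continuous f
  | k.+1 => fun E F f => continuous f /\
      exists df : (E * E)%type -> F,
        (forall x h, (fun t : R => t^-1 *: (f (x + t *: h) - f x)) @ 0^' --> df (x, h))
        /\ @Ck R k (E * E)%type F df
  end.

Definition smooth (R : realType) (E F : tvsType R) (f : E -> F) : Prop :=
  forall k, Ck k f.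

Definition symplectic_form (R : realType) (V : tvsType R) (omega : V -> V -> R) : Prop :=
  [/\ (forall a x y z, omega (a *: x + y) z = a * omega x z + omega y z),
      (forall a x y z, omega z (a *: x + y) = a * omega z x + omega z y),
      (forall x, omega x x = 0),
      continuous (fun p : V * V => (omega p.1 p.2 : R^o))
    & (forall x, (forall y, omega x y = 0) -> x = 0)].

(** gamma : R -> Sp(V, omega) is a group homomorphism into the continuous linear
    omega-preserving maps (invertibility follows from the group law) and the
    action map R x V -> V, (t,v) |-> gamma t v, is smooth. *)
Definition smooth_symplectic_action (R : realType) (V : tvsType R)
    (omega : V -> V -> R) (gamma : R -> V -> V) : Prop :=
  [/\ (forall t a x y, gamma t (a *: x + y) = a *: gamma t x + gamma t y),
      (forall t, continuous (gamma t)) /\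
      (forall t x y, omega (gamma t x) (gamma t y) = omega x y),
      (forall x, gamma 0 x = x),
      (forall s t x, gamma (s + t) x = gamma s (gamma t x))
    & smooth (fun p : (R^o * V)%type => gamma p.1 p.2)].

Definition is_generator (R : realType) (V : tvsType R) (gamma : R -> V -> V)
    (D : V -> V) : Prop :=
  forall x, (fun t : R => t^-1 *: (gamma t x - x)) @ 0^' --> D x.

Definition Qform (R : realType) (V : tvsType R) (omega : V -> V -> R) (D : V -> V)
  (x y : V) : R := omega (D x) y.

Definition Q_continuous (R : realType) (V : Type) (Q : V -> V -> R) (beta : V -> R) : Prop :=
  exists M : R, forall v, Q v v <= 1 -> beta v <= M.

Definition inner_product (R : realType) (H : normedModType R) (ip : H -> H -> R) : Prop :=
  [/\ (forall a u v w, ip (a *: u + v) w = a * ip u w + ip v w),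
      (forall u v, ip u v = ip v u)
    & (forall u, ip u u = `|u| ^+ 2)].

(** (H, ip) is a real Hilbert space and iota : V -> H a linear map identifying
    (V, B) with a dense subspace of H: H is "the" Hilbert completion of (V,B). *)
Definition hilbert_completion (R : realType) (V : lmodType R) (B : V -> V -> R)
    (H : completeNormedModType R) (ip : H -> H -> R) (iota : V -> H) : Prop :=
  [/\ inner_product ip,
      (forall a x y, iota (a *: x + y) = a *: iota x + iota y),
      (forall x y, ip (iota x) (iota y) = B x y)
    & closure (range iota) = setT].

Definition closed_graph (V : Type) (H1 H2 : topologicalType)
    (iota1 : V -> H1) (iota2 : V -> H2) (T : V -> V) : set (H1 * H2) :=
  closure (range (fun x => (iota1 x, iota2 (T x)))).

Definition is_graph (H1 H2 : Type) (G : set (H1 * H2)) : Prop :=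
  forall a b c, G (a, b) -> G (a, c) -> b = c.

Definition op_range (H1 H2 : Type) (G : set (H1 * H2)) : set H2 :=
  [set b | exists a, G (a, b)].

Definition kappa (R : realType) (V H : Type) (ip : H -> H -> R) (eta : V -> H)
  (x y : V) : R := ip (eta x) (eta y).

(* Main.v *)
Require Import Defs.
From HB Require Import structures.
From mathcomp Require Import all_boot all_order all_algebra.
From mathcomp Require Import all_classical all_reals all_analysis.
From mathcomp Require Import ring lra.
Import Order.TTheory GRing.Theory Num.Theory.
Import numFieldNormedType.Exports.
Local Open Scope classical_set_scope.
Local Open Scope ring_scope.
Set Implicit Arguments. Unset Strict Implicit. Unset Printing Implicit Defensive.

Section Hilbert.
Context (R : realType) (H : normedModType R) (ip : H -> H -> R).
Hypothesis Hip : inner_product ip.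

Lemma ip_lin a u v w : ip (a *: u + v) w = a * ip u w + ip v w.
Proof. by case: Hip. Qed.
Lemma ipC u v : ip u v = ip v u.
Proof. by case: Hip. Qed.
Lemma ipxx u : ip u u = `|u| ^+ 2.
Proof. by case: Hip. Qed.
Lemma ip0l w : ip 0 w = 0.
Proof.
have := ip_lin 1 0 0 w; rewrite scaler0 addr0 mul1r => h; lra.
Qed.
Lemma ipDl u v w : ip (u + v) w = ip u w + ip v w.
Proof. by rewrite -[u]scale1r ip_lin mul1r scale1r. Qed.
Lemma ipZl a u w : ip (a *: u) w = a * ip u w.
Proof. by rewrite -[a *: u]addr0 ip_lin ip0l addr0. Qed.
Lemma ipNl u w : ip (- u) w = - ip u w.
Proof. by rewrite -scaleN1r ipZl mulN1r. Qed.
Lemma ipBl u v w : ip (u - v) w = ip u w - ip v w.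
Proof. by rewrite ipDl ipNl. Qed.
Lemma ip0r w : ip w 0 = 0.
Proof. by rewrite ipC ip0l. Qed.
Lemma ipDr u v w : ip w (u + v) = ip w u + ip w v.
Proof. by rewrite ipC ipDl !(ipC w). Qed.
Lemma ipZr a u w : ip w (a *: u) = a * ip w u.
Proof. by rewrite ipC ipZl ipC. Qed.
Lemma ipNr u w : ip w (- u) = - ip w u.
Proof. by rewrite ipC ipNl ipC. Qed.
Lemma ipBr u v w : ip w (u - v) = ip w u - ip w v.
Proof. by rewrite ipDr ipNr. Qed.

Lemma ip_eq0 u : ip u u = 0 -> u = 0.
Proof. by rewrite ipxx => /eqP; rewrite expf_eq0 /= normr_eq0 => /eqP. Qed.

Lemma normD2 u v : `|u + v| ^+ 2 = `|u| ^+ 2 + 2 * ip u v + `|v| ^+ 2.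
Proof. by rewrite -!ipxx ipDl !ipDr (ipC v u); ring. Qed.
Lemma normB2 u v : `|u - v| ^+ 2 = `|u| ^+ 2 - 2 * ip u v + `|v| ^+ 2.
Proof. by rewrite normD2 ipNr normrN; ring. Qed.

Lemma polar u v : ip u v = (`|u + v| * `|u + v| - `|u - v| * `|u - v|) / 4.
Proof. by rewrite -!expr2 normD2 normB2; field. Qed.

Lemma cvg_ip (T : Type) (F : set_system T) (FF : Filter F) (f g : T -> H) a b :
  f @ F --> a -> g @ F --> b -> (fun x => ip (f x) (g x)) @ F --> ip a b.
Proof.
move=> fa gb.
rewrite (_ : (fun x => ip (f x) (g x)) = fun x =>
  (`|f x + g x| * `|f x + g x| - `|f x - g x| * `|f x - g x|) / 4); last first.
  by apply/funext => x; rewrite polar.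
rewrite polar.
have h1 : (fun x => `|f x + g x|) @ F --> `|a + b| by apply: cvg_norm; apply: cvgD.
have h2 : (fun x => `|f x - g x|) @ F --> `|a - b| by apply: cvg_norm; apply: cvgB.
apply: cvgM; last exact: cvg_cst.
by apply: cvgB; apply: cvgM.
Qed.

Lemma ip_bound u v : `|ip u v| <= (`|u| + `|v|) ^+ 2.
Proof.
rewrite polar -!expr2.
have h1 : `|u + v| <= `|u| + `|v| := ler_normD u v.
have h2 : `|u - v| <= `|u| + `|v| by rewrite -(normrN v) ler_normD.
have p1 : 0 <= `|u + v| by [].
have p2 : 0 <= `|u - v| by [].
rewrite ler_norml; apply/andP; split; nra.
Qed.

Lemma parallelogram (u v : H) :
  `|u + v| ^+ 2 + `|u - v| ^+ 2 = 2 * `|u| ^+ 2 + 2 * `|v| ^+ 2.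
Proof. rewrite normD2 normB2; ring. Qed.

Lemma orth_min (r u : H) : (forall t : R, `|r| <= `|r - t *: u|) -> ip r u = 0.
Proof.
move=> h.
set c := ip r u; set N := `|u| ^+ 2.
have N0 : 0 <= N by rewrite /N sqr_ge0.
set t := c / (N + 1).
have ht : c = t * (N + 1) by rewrite /t mulfVK // gt_eqF // ltr_wpDl.
have h1 := h t.
have h2 : `|r| ^+ 2 <= `|r - t *: u| ^+ 2.
  by rewrite lerXn2r // ?nnegrE.
rewrite normB2 ipZr -/c normrZ exprMn real_normK ?num_real // -/N in h2.
have h3 : t ^+ 2 * (N + 2) <= 0.
  rewrite ht in h2; rewrite !expr2 in h2 *; nra.
have t0 : t = 0.
  apply/eqP; rewrite -sqrf_eq0 eq_le sqr_ge0 andbT.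
  by rewrite -(pmulr_lle0 _ (_ : 0 < N + 2)) // ltr_wpDl.
by rewrite ht t0 mul0r.
Qed.

End Hilbert.

Lemma lim_ge (R : realType) (u : nat -> R) (l c : R) :
  u @ \oo --> l -> (forall n, c <= u n) -> c <= l.
Proof.
move=> ul hc.
apply: (closed_cvg [set x | c <= x] (@closed_ge _ c) _ l ul).
by near=> n; apply: hc.
Unshelve. all: by end_near. Qed.

Lemma lim_le_from (R : realType) (u : nat -> R) (l c : R) (k : nat) :
  u @ \oo --> l -> (forall n, (k <= n)%N -> u n <= c) -> l <= c.
Proof.
move=> ul hc.
apply: (closed_cvg [set x | x <= c] (@closed_le _ c) _ l ul).
by exists k => // n /= kn; apply: hc.
Qed.

Lemma lim_le (R : realType) (u : nat -> R) (l c : R) :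
  u @ \oo --> l -> (forall n, u n <= c) -> l <= c.
Proof.
move=> ul hc.
apply: (closed_cvg [set x | x <= c] (@closed_le _ c) _ l ul).
by near=> n; apply: hc.
Unshelve. all: by end_near. Qed.

Section Seqs.
Context (R : realType).

Lemma natinv_near (e : R) : 0 < e -> \forall n \near \oo, n.+1%:R^-1 < e.
Proof. by move=> e0; apply: (near_infty_natSinv_lt (PosNum e0)). Qed.

Lemma closure_seq (T : normedModType R) (A : set T) p :
  closure A p -> exists u : nat -> T, (forall n, A (u n)) /\ u @ \oo --> p.
Proof.
move=> cl.
have : forall n : nat, exists x, A x /\ `|p - x| < n.+1%:R^-1.
  move=> n; have [x [Ax bx]] := cl _ (nbhsx_ballx p (n.+1%:R^-1 : R) ltac:(by [])).
  by exists x; split => //; move: bx; rewrite -ball_normE.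
move=> /choice[u hu]; exists u; split; first by move=> n; case: (hu n).
apply/cvgrPdist_lt => e e0.
near=> n; apply: (lt_trans (proj2 (hu n))).
by near: n; apply: natinv_near.
Unshelve. all: by end_near. Qed.

Lemma seq_closure (T : topologicalType) (A : set T) (u : nat -> T) p :
  (forall n, A (u n)) -> u @ \oo --> p -> closure A p.
Proof.
move=> Au up.
apply: (closed_cvg (closure A) (@closed_closure _ A) _ p up).
by near=> n; apply: subset_closure.
Unshelve. all: by end_near. Qed.

Lemma cauchy_seq (T : completeNormedModType R) (u : nat -> T) :
  (forall e, 0 < e -> exists N, forall n m, (N <= n)%N -> (N <= m)%N -> `|u n - u m| < e) ->
  cvg (u @ \oo).
Proof.
move=> hc; apply/cauchy_cvgP/cauchy_ballP => e e0.
have [N hN] := hc e e0.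
rewrite near_simpl.
exists ([set n | (N <= n)%N], [set n | (N <= n)%N]).
  by split; exists N.
move=> [n m] /= [Nn Nm].
by rewrite -ball_normE /ball_ /=; apply: hN.
Qed.

Lemma cvg_cauchy_seq (T : normedModType R) (u : nat -> T) (l : T) :
  u @ \oo --> l ->
  (forall e, 0 < e -> exists N, forall n m, (N <= n)%N -> (N <= m)%N -> `|u n - u m| < e).
Proof.
move=> /cvgrPdist_lt ul e e0.
have [N _ hN] := ul (e/2) ltac:(by rewrite divr_gt0).
exists N => n m Nn Nm.
have := hN n Nn; have := hN m Nm => /= h1 h2.
rewrite (_ : u n - u m = (l - u m) - (l - u n)); last by rewrite opprB [RHS]addrC addrA subrK.
apply: (le_lt_trans (ler_normB _ _)).
lra.
Qed.

End Seqs.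

Section LinMap.
Context (R : realType) (U W : lmodType R) (f : U -> W).
Hypothesis hf : forall a x y, f (a *: x + y) = a *: f x + f y.
Lemma lin0 : f 0 = 0.
Proof. by have := hf 1 0 0; rewrite scaler0 addr0 scale1r => /(congr1 (fun v => v - f 0)); rewrite subrr addrK. Qed.
Lemma linD x y : f (x + y) = f x + f y.
Proof. by have := hf 1 x y; rewrite !scale1r. Qed.
Lemma linZ a x : f (a *: x) = a *: f x.
Proof. by rewrite -[a *: x]addr0 hf lin0 addr0. Qed.
Lemma linN x : f (- x) = - f x.
Proof. by rewrite -scaleN1r linZ scaleN1r. Qed.
Lemma linB x y : f (x - y) = f x - f y.
Proof. by rewrite linD linN. Qed.
End LinMap.

Lemma subrACA' (G : zmodType) (x y z t : G) : x - y - (z - t) = x - z - (y - t).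
Proof. rewrite !opprB addrACA [RHS]addrACA; congr (_ + _); exact: addrC. Qed.

Lemma cvg_fst_seq (A B : topologicalType) (u : nat -> A * B) (p : A * B) :
  u @ \oo --> p -> (fun n => (u n).1) @ \oo --> p.1.
Proof. by move=> up; apply: (cvg_comp _ _ up); exact: cvg_fst. Qed.

Lemma cvg_snd_seq (A B : topologicalType) (u : nat -> A * B) (p : A * B) :
  u @ \oo --> p -> (fun n => (u n).2) @ \oo --> p.2.
Proof. by move=> up; apply: (cvg_comp _ _ up); exact: cvg_snd. Qed.


Section Main.
Context (R : realType) (V : tvsType R) (omega : V -> V -> R)
  (gamma : R -> V -> V) (D : V -> V).
Hypothesis Homega : symplectic_form omega.
Hypothesis Hgamma : smooth_symplectic_action omega gamma.
Hypothesis HD : is_generator gamma D.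
Context (HQ : completeNormedModType R) (ipQ : HQ -> HQ -> R) (iotaQ : V -> HQ).
Hypothesis HVQ : hilbert_completion (Qform omega D) ipQ iotaQ.
Context (eta : V -> HQ).
Hypothesis Heta : forall x y : V, ipQ (eta x) (iotaQ y) = omega x y.
Context (Hk : completeNormedModType R) (ipk : Hk -> Hk -> R) (iotak : V -> Hk).
Hypothesis HVk : hilbert_completion (kappa ipQ eta) ipk iotak.

Lemma omega_linl a x y z : omega (a *: x + y) z = a * omega x z + omega y z.
Proof. by case: Homega. Qed.
Lemma omega_linr a x y z : omega z (a *: x + y) = a * omega z x + omega z y.
Proof. by case: Homega. Qed.
Lemma omega_xx x : omega x x = 0.
Proof. by case: Homega. Qed.
Lemma omega_nondeg x : (forall y, omega x y = 0) -> x = 0.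
Proof. case: Homega => _ _ _ _ h; exact: h. Qed.
Lemma omega_cont : continuous (fun p : V * V => (omega p.1 p.2 : R^o)).
Proof. case: Homega => _ _ _ h _; exact: h. Qed.

Lemma omega0l z : omega 0 z = 0.
Proof. have := omega_linl 1 0 0 z; rewrite scaler0 addr0 mul1r => h; lra. Qed.
Lemma omega0r z : omega z 0 = 0.
Proof. have := omega_linr 1 0 0 z; rewrite scaler0 addr0 mul1r => h; lra. Qed.
Lemma omegaDl x y z : omega (x + y) z = omega x z + omega y z.
Proof. by have := omega_linl 1 x y z; rewrite scale1r mul1r. Qed.
Lemma omegaDr x y z : omega z (x + y) = omega z x + omega z y.
Proof. by have := omega_linr 1 x y z; rewrite scale1r mul1r. Qed.
Lemma omegaZl a x z : omega (a *: x) z = a * omega x z.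
Proof. by have := omega_linl a x 0 z; rewrite addr0 omega0l addr0. Qed.
Lemma omegaZr a x z : omega z (a *: x) = a * omega z x.
Proof. by have := omega_linr a x 0 z; rewrite addr0 omega0r addr0. Qed.
Lemma omegaNl x z : omega (- x) z = - omega x z.
Proof. by rewrite -scaleN1r omegaZl mulN1r. Qed.
Lemma omegaNr x z : omega z (- x) = - omega z x.
Proof. by rewrite -scaleN1r omegaZr mulN1r. Qed.
Lemma omegaBl x y z : omega (x - y) z = omega x z - omega y z.
Proof. by rewrite omegaDl omegaNl. Qed.
Lemma omegaBr x y z : omega z (x - y) = omega z x - omega z y.
Proof. by rewrite omegaDr omegaNr. Qed.
Lemma omega_anti x y : omega x y = - omega y x.
Proof.
have := omega_xx (x + y); rewrite omegaDl !omegaDr !omega_xx => h; lra.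
Qed.

Lemma ipQ_inner : inner_product ipQ. Proof. by case: HVQ. Qed.
Lemma iotaQ_lin a x y : iotaQ (a *: x + y) = a *: iotaQ x + iotaQ y.
Proof. by case: HVQ. Qed.
Lemma ipQ_iota x y : ipQ (iotaQ x) (iotaQ y) = omega (D x) y.
Proof. by case: HVQ. Qed.
Lemma iotaQ_dense : closure (range iotaQ) = setT.
Proof. by case: HVQ. Qed.
Lemma ipk_inner : inner_product ipk. Proof. by case: HVk. Qed.
Lemma iotak_lin a x y : iotak (a *: x + y) = a *: iotak x + iotak y.
Proof. by case: HVk. Qed.
Lemma ipk_iota x y : ipk (iotak x) (iotak y) = ipQ (eta x) (eta y).
Proof. by case: HVk. Qed.
Lemma iotak_dense : closure (range iotak) = setT.
Proof. by case: HVk. Qed.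

Lemma Qsym x y : omega (D x) y = omega (D y) x.
Proof. by rewrite -!ipQ_iota (ipC ipQ_inner). Qed.

Lemma Dskew x y : omega (D (D x)) y = - omega (D x) (D y).
Proof. by rewrite Qsym omega_anti. Qed.

Lemma iotaQ_skew x y :
  ipQ (iotaQ (D x)) (iotaQ y) = - ipQ (iotaQ x) (iotaQ (D y)).
Proof. by rewrite !ipQ_iota Dskew. Qed.

Lemma dense_orth (T : completeNormedModType R) (ip : T -> T -> R) (io : V -> T) :
  inner_product ip -> closure (range io) = setT ->
  forall a, (forall z, ip a (io z) = 0) -> a = 0.
Proof.
move=> hip hd a ha.
have : closure (range io) a by rewrite hd.
move=> /closure_seq [u [hu ul]].
apply: (ip_eq0 hip).
have h1 : (fun n => ip a (u n)) @ \oo --> ip a a.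
  by apply: (cvg_ip hip) => //; apply: cvg_cst.
have h2 : (fun n => ip a (u n)) @ \oo --> (0 : R).
  apply: cvg_near_cst; near=> n; have [z _ <-] := hu n; exact: ha.
exact: (cvg_unique _ h1 h2).
Unshelve. all: by end_near. Qed.

Lemma eta_lin a x y : eta (a *: x + y) = a *: eta x + eta y.
Proof.
apply/eqP; rewrite -subr_eq0; apply/eqP.
apply: (dense_orth ipQ_inner iotaQ_dense) => z.
have hip := ipQ_inner.
by rewrite (ipBl hip) (ipDl hip) (ipZl hip) !Heta omega_linl subrr.
Qed.

Lemma etaD z : eta (D z) = iotaQ z.
Proof.
apply/eqP; rewrite -subr_eq0; apply/eqP.
apply: (dense_orth ipQ_inner iotaQ_dense) => w.
have hip := ipQ_inner.
by rewrite (ipBl hip) Heta ipQ_iota subrr.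
Qed.

Lemma eta_skew x z : ipQ (eta x) (iotaQ (D z)) = - ipQ (iotaQ x) (iotaQ z).
Proof.
by rewrite Heta ipQ_iota omega_anti Qsym.
Qed.

Lemma iotak_norm x : `|iotak x| = `|eta x|.
Proof.
have h : `|iotak x| ^+ 2 = `|eta x| ^+ 2.
  by rewrite -(ipxx ipk_inner) -(ipxx ipQ_inner) ipk_iota.
by apply/eqP; rewrite -(eqrXn2 (n:=2)) // h.
Qed.


Section Vlim.
Context {T : Type} {F : set_system T} {FF : Filter F}.

Lemma omega_cvg (f g : T -> V) a b : f @ F --> a -> g @ F --> b ->
  (fun t => omega (f t) (g t)) @ F --> omega a b.
Proof.
move=> fa gb.
have h := (@continuous2_cvg _ _ _ _ F _ f g (fun u v => (omega u v : R^o)) a b (@omega_cont (a, b)) fa gb).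
exact (h FF).
Qed.

Lemma cvgV_add (f g : T -> V) a b : f @ F --> a -> g @ F --> b ->
  (fun t => f t + g t) @ F --> a + b.
Proof.
move=> fa gb.
exact: (@continuous2_cvg _ _ _ _ F _ f g (fun u v : V => u + v) a b (@add_continuous V (a, b)) fa gb).
Qed.

Lemma cvgV_scale (k : R) (f : T -> V) a : f @ F --> a ->
  (fun t => k *: f t) @ F --> k *: a.
Proof.
move=> fa.
exact: (@continuous2_cvg _ _ _ _ F _ (fun _ => (k : R^o)) f (fun (u : R^o) (v : V) => u *: v) k a
  (@scale_continuous R V (k, a)) (cvg_cst (k : R^o)) fa).
Qed.

Lemma cvgV_sub (f g : T -> V) a b : f @ F --> a -> g @ F --> b ->
  (fun t => f t - g t) @ F --> a - b.
Proof.
move=> fa gb.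
exact: (@continuous2_cvg _ _ _ _ F _ f g (fun u v : V => u - v) a b (@sub_continuous V (a, b)) fa gb).
Qed.

End Vlim.

Lemma V_unique (T : Type) (F : set_system T) (FF : ProperFilter F) (f : T -> V) (a b : V) :
  f @ F --> a -> f @ F --> b -> a = b.
Proof.
move=> fa fb; apply/eqP; rewrite -subr_eq0; apply/eqP; apply: omega_nondeg => y.
rewrite omegaBl.
have h1 : (fun t => omega (f t) y) @ F --> omega a y.
  by apply: omega_cvg => //; apply: cvg_cst.
have h2 : (fun t => omega (f t) y) @ F --> omega b y.
  by apply: omega_cvg => //; apply: cvg_cst.
have e : omega a y = omega b y by exact: (cvg_unique _ h1 h2).
lra.
Qed.

Lemma gamma_lin t a x y : gamma t (a *: x + y) = a *: gamma t x + gamma t y.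
Proof. by case: Hgamma. Qed.
Lemma gamma_cont t : continuous (gamma t).
Proof. by case: Hgamma => _ [+ _]. Qed.
Lemma gamma_pres t x y : omega (gamma t x) (gamma t y) = omega x y.
Proof. by case: Hgamma => _ [_ +]. Qed.
Lemma gamma0 x : gamma 0 x = x.
Proof. by case: Hgamma => _ _ +. Qed.
Lemma gammaD s t x : gamma (s + t) x = gamma s (gamma t x).
Proof. by case: Hgamma => _ _ _ +. Qed.

Definition quot (x : V) (h : R) : V := h^-1 *: (gamma h x - x).

Lemma quot_cvg x : quot x @ 0^' --> D x.
Proof. exact: HD. Qed.

Lemma D_lin a x y : D (a *: x + y) = a *: D x + D y.
Proof.
apply: (@V_unique _ (0^' : set_system R) _ (quot (a *: x + y))).
  exact: quot_cvg.
have -> : quot (a *: x + y) = fun h => a *: quot x h + quot y h.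
  apply/funext => h; rewrite /quot (linD (gamma_lin h)) (linZ (gamma_lin h)).
  rewrite scalerA [a * _]mulrC -scalerA -scalerDr; congr (_ *: _).
  by rewrite scalerBr opprD addrACA.
by apply: cvgV_add; [apply: cvgV_scale|]; apply: quot_cvg.
Qed.

Lemma D_gamma t x : D (gamma t x) = gamma t (D x).
Proof.
apply: (@V_unique _ (0^' : set_system R) _ (quot (gamma t x))).
  exact: quot_cvg.
have -> : quot (gamma t x) = fun h => gamma t (quot x h).
  apply/funext => h; rewrite /quot (linZ (gamma_lin t)) (linB (gamma_lin t)).
  by rewrite -gammaD [h + t]addrC gammaD.
apply: continuous_cvg; first exact: gamma_cont.
exact: quot_cvg.
Qed.

Lemma D_quot w h : D (quot w h) = quot (D w) h.
Proof. by rewrite /quot (linZ D_lin) (linB D_lin) D_gamma. Qed.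

Lemma normQ2 z : `|iotaQ z| ^+ 2 = omega (D z) z.
Proof. by rewrite -(ipxx ipQ_inner) ipQ_iota. Qed.

Lemma iotaQ_quot w : (fun h => iotaQ (quot w h)) @ 0^' --> iotaQ (D w).
Proof.
have hz : (fun h => omega (D (quot w h - D w)) (quot w h - D w)) @ 0^' --> omega 0 0.
  apply: omega_cvg.
    have -> : (fun h => D (quot w h - D w)) = fun h => quot (D w) h - D (D w).
      by apply/funext => h; rewrite (linB D_lin) D_quot.
    by rewrite -(subrr (D (D w))); apply: cvgV_sub; [apply: quot_cvg| apply: cvg_cst].
  by rewrite -(subrr (D w)); apply: cvgV_sub; [apply: quot_cvg| apply: cvg_cst].
rewrite omega0l in hz.
apply/cvgrPdist_lt => e e0.
move/cvgrPdist_lt : hz => /(_ (e ^+ 2)) hz.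
have e2 : 0 < e ^+ 2 by rewrite exprn_gt0.
apply: filterS (hz e2) => h /=; rewrite sub0r normrN => hlt.
have hn := normQ2 (quot w h - D w).
rewrite -(normrN (iotaQ (D w) - _)) opprB -(linB iotaQ_lin).
have p : 0 <= `|iotaQ (quot w h - D w)| by [].
have hle := ler_norm (omega (D (quot w h - D w)) (quot w h - D w)).
rewrite !expr2 in hn hlt; nra.
Qed.

Lemma f_derive r y t :
  is_derive t (1 : R) (fun t => ipQ r (iotaQ (gamma t y))) (ipQ r (iotaQ (D (gamma t y)))).
Proof.
set f := fun t => ipQ r (iotaQ (gamma t y)).
have hc : (fun h : R => h^-1 *: ((f \o shift t) (h *: 1) - f t)) @ 0^' -->
    ipQ r (iotaQ (D (gamma t y))).
  have -> : (fun h : R => h^-1 *: ((f \o shift t) (h *: 1) - f t)) =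
      fun h => ipQ r (iotaQ (quot (gamma t y) h)).
    apply/funext => h; rewrite /f /= /quot (linZ iotaQ_lin) (linB iotaQ_lin).
    have -> : h%:A = h by rewrite /GRing.scale /= mulr1.
    by rewrite (ipZr ipQ_inner) (ipBr ipQ_inner) gammaD.
  by apply: (cvg_ip ipQ_inner); [apply: cvg_cst | apply: iotaQ_quot].
apply: DeriveDef; first by apply/cvg_ex; eexists; exact: hc.
exact: (cvg_lim _ hc).
Qed.

Lemma normQ_gamma t y : `|iotaQ (gamma t y)| = `|iotaQ y|.
Proof.
have h : `|iotaQ (gamma t y)| ^+ 2 = `|iotaQ y| ^+ 2.
  by rewrite !normQ2 D_gamma gamma_pres.
by apply/eqP; rewrite -(eqrXn2 (n:=2)) // h.
Qed.

Lemma ode (s : R) (hs : s = 1 \/ s = -1) r :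
  (forall z, ipQ r (iotaQ (D z + s *: z)) = 0) -> r = 0.
Proof.
move=> hr; apply: (dense_orth ipQ_inner iotaQ_dense) => y.
set f := fun t => ipQ r (iotaQ (gamma t y)).
have hf' t : is_derive t (1 : R) f (- s * f t).
  apply: is_derive_eq; first exact: f_derive.
  have := hr (gamma t y); rewrite (linD iotaQ_lin) (linZ iotaQ_lin).
  rewrite (ipDr ipQ_inner) (ipZr ipQ_inner) /f => h; lra.
have hl : forall t, is_derive t (1 : R) (fun u : R => s * u) s.
  move=> t; have := is_deriveZ s (@is_derive_id _ R t 1).
  by rewrite /GRing.scale /= mulr1.
have he t : is_derive t (1 : R) (fun u : R => expR (s * u)) (expR (s * t) * s).
  exact: (@is_derive1_comp _ expR (fun u => s * u) t _ _ (is_derive_expR _) (hl t)).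
set g := fun t => f t * expR (s * t).
have hg t : is_derive t (1 : R) g 0.
  have := is_deriveM (hf' t) (he t) => hm.
  apply: (is_derive_eq hm).
  rewrite /GRing.scale /=; ring.
have cst t : g t = f 0.
  by rewrite (@is_derive_0_is_cst _ g t 0 hg) /g mulr0 expR0 mulr1.
pose B := (`|r| + `|iotaQ y|) ^+ 2.
have bnd t : `|f t| <= B.
  by rewrite /f /B -(normQ_gamma t y); apply: (ip_bound ipQ_inner).
have key T : `|f 0| * expR T <= B.
  have := cst (- s * T); rewrite /g => e.
  have sT : s * (- s * T) = - T by case: hs => ->; ring.
  rewrite sT in e.
  have : f 0 * expR T = f (- s * T).
    by rewrite -e -mulrA -expRD addNr expR0 mulr1.
  move=> e2; rewrite -(ger0_norm (expR_ge0 T)) -normrM e2; exact: bnd.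
have f0ge : 0 <= `|f 0| by [].
have B0 : 0 <= B by rewrite /B sqr_ge0.
suff f00 : f 0 = 0 by move: f00; rewrite /f gamma0.
apply/eqP; rewrite -normr_eq0 eq_le f0ge andbT leNgt; apply/negP => pos.
have := key (B / `|f 0|).
have := expR_ge1Dx (B / `|f 0|).
move=> h1 h2.
have : `|f 0| * (1 + B / `|f 0|) <= B.
  apply: le_trans h2; rewrite ler_pM2l //.
rewrite mulrDr mulr1 mulrCA divff ?mulr1; last by rewrite gt_eqF.
move=> h3; exfalso; lra.
Qed.

Lemma para_arith (X Y A B d a b : R) :
  (2 * X) ^+ 2 + Y ^+ 2 = 2 * A ^+ 2 + 2 * B ^+ 2 -> A ^+ 2 <= a ^+ 2 ->
  B ^+ 2 <= b ^+ 2 -> d ^+ 2 <= X ^+ 2 ->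
  Y ^+ 2 <= 2 * a ^+ 2 + 2 * b ^+ 2 - 4 * d ^+ 2.
Proof. rewrite !expr2 => *; nra. Qed.

Lemma cauchy_arith (d a b c q : R) : 0 <= d -> 0 < a -> 0 < b -> a <= 1 -> b <= 1 ->
  a <= c -> b <= c -> c < q -> 2 * (d + a) ^+ 2 + 2 * (d + b) ^+ 2 - 4 * d ^+ 2 < (8 * d + 4) * q.
Proof.
move=> d0 a0 b0 a1 b1 ac bc cq.
have h1 : d * a <= d * c by rewrite ler_wpM2l.
have h2 : d * b <= d * c by rewrite ler_wpM2l.
have h3 : a * a <= a by rewrite ger_pMr.
have h4 : b * b <= b by rewrite ger_pMr.
have h5 : d * c <= d * q by rewrite ler_wpM2l // ltW.
rewrite !expr2; nra.
Qed.

Definition Lop (s : R) (z : V) : HQ := iotaQ (D z + s *: z).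

Lemma Lop_lin s a x y : Lop s (a *: x + y) = a *: Lop s x + Lop s y.
Proof.
rewrite /Lop D_lin scalerDr scalerA [s * a]mulrC -scalerA.
rewrite addrACA -scalerDr; exact: iotaQ_lin.
Qed.

Lemma natinv_mono (n N : nat) : (N <= n)%N -> n.+1%:R^-1 <= N.+1%:R^-1 :> R.
Proof. by move=> h; rewrite lef_pV2 ?posrE // ler_nat ltnS. Qed.

Lemma natinv_le1 (n : nat) : n.+1%:R^-1 <= 1 :> R.
Proof. by rewrite invf_le1 // ler1n. Qed.

Lemma approx (s : R) (hs : s = 1 \/ s = -1) (w : HQ) :
  exists z : nat -> V, (fun n => Lop s (z n)) @ \oo --> w.
Proof.
pose S := range (fun z => `|w - Lop s z|).
have hinf : has_inf S.
  by split; [exists `|w - Lop s 0|; exists 0 | exists 0 => x [z _ <-]].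
set d := inf S.
have dle z : d <= `|w - Lop s z| by apply: (ge_inf (proj2 hinf)); exists z.
have d0 : 0 <= d by apply: lb_le_inf; [case: hinf | move=> x [z _ <-]].
have : forall n : nat, exists z, `|w - Lop s z| < d + n.+1%:R^-1.
  move=> n; have [e [z _ <-] hz] := inf_adherent (ltac:(by []) : 0 < n.+1%:R^-1 :> R) hinf.
  by exists z.
move=> /choice [zs hzs].
pose v n := Lop s (zs n).
have pb n m : `|v n - v m| ^+ 2 <= 2 * (d + n.+1%:R^-1) ^+ 2 + 2 * (d + m.+1%:R^-1) ^+ 2 - 4 * d ^+ 2.
  have hp := parallelogram ipQ_inner (w - v n) (w - v m).
  have ee : w - v n - (w - v m) = - (v n - v m).
    by rewrite opprB [RHS]opprB [LHS]addrC addrA subrK.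
  rewrite ee in hp.
  have mid : w - v n + (w - v m) = 2 *: (w - Lop s (2^-1 *: (zs n + zs m))).
    rewrite (linZ (Lop_lin s)) (linD (Lop_lin s)) scalerBr scalerA mulfV // scale1r.
    rewrite scalerDl scale1r /v opprD; rewrite -!addrA; congr (_ + _).
    by rewrite addrCA.
  rewrite mid normrZ normrN in hp.
  have h1 := dle (2^-1 *: (zs n + zs m)).
  have h2 := hzs n; have h3 := hzs m.
  have e1 : `|(2 : R)| = 2 by rewrite ger0_norm.
  rewrite e1 in hp.
  have q1 : `|w - v n| ^+ 2 <= (d + n.+1%:R^-1) ^+ 2.
    rewrite lerXn2r ?nnegrE ?addr_ge0 //; exact: ltW h2.
  have q2 : `|w - v m| ^+ 2 <= (d + m.+1%:R^-1) ^+ 2.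
    rewrite lerXn2r ?nnegrE ?addr_ge0 //; exact: ltW h3.
  have q3 : d ^+ 2 <= `|w - Lop s (2^-1 *: (zs n + zs m))| ^+ 2.
    by rewrite lerXn2r ?nnegrE.
  exact: (para_arith hp q1 q2 q3).
have cv : cvg (v @ \oo).
  apply: cauchy_seq => e e0.
  have ee : 0 < e ^+ 2 / (8 * d + 4) by rewrite divr_gt0 ?exprn_gt0 // ltr_wpDl // mulr_ge0.
  have [N _ hN] := natinv_near ee.
  exists N => n m Nn Nm.
  have := pb n m.
  have en := natinv_mono Nn; have em := natinv_mono Nm.
  have hNN := hN N (leqnn N).
  have l1 := natinv_le1 n; have l2 := natinv_le1 m.
  have p1 : 0 < n.+1%:R^-1 :> R by [].
  have p2 : 0 < m.+1%:R^-1 :> R by [].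
  move=> hb.
  have hb2 : `|v n - v m| ^+ 2 < e ^+ 2.
    apply: (le_lt_trans hb).
    have k : (8 * d + 4) * (e ^+ 2 / (8 * d + 4)) = e ^+ 2.
      by rewrite mulrC divfK // gt_eqF // ltr_wpDl // mulr_ge0.
    rewrite -k; exact: (cauchy_arith d0 p1 p2 l1 l2 en em hNN).
  have py : 0 <= `|v n - v m| by [].
  rewrite !expr2 in hb2; nra.
set m := lim (v @ \oo).
have vm : v @ \oo --> m by exact: cv.
set r := w - m.
have nr : (fun n => `|w - v n|) @ \oo --> `|r|.
  by apply: cvg_norm; apply: cvgB => //; apply: cvg_cst.
have rk k : `|r| <= d + k.+1%:R^-1.
  apply: (@lim_le_from R (fun n => `|w - v n|) `|r| _ k nr) => n kn.
  apply: ltW; apply: (lt_le_trans (hzs n)); rewrite lerD2l; exact: natinv_mono.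
have rd : `|r| <= d.
  rewrite leNgt; apply/negP => hlt.
  have [k _ hk] := natinv_near (ltac:(by rewrite subr_gt0) : 0 < `|r| - d).
  move: (hk k (leqnn k)) => /= h1; have h2 := rk k.
  have h3 : `|r| - d <= k.+1%:R^-1 by rewrite lerBlDl.
  by have := lt_le_trans h1 h3; rewrite ltxx.
have orth z : ipQ r (Lop s z) = 0.
  apply: (orth_min ipQ_inner) => t.
  apply: (le_trans rd).
  have nt : (fun n => `|w - Lop s (t *: z + zs n)|) @ \oo --> `|r - t *: Lop s z|.
    apply: cvg_norm.
    have -> : (fun n => w - Lop s (t *: z + zs n)) = fun n => (w - t *: Lop s z) - v n.
      by apply/funext => n; rewrite Lop_lin opprD addrA.
    have -> : r - t *: Lop s z = (w - t *: Lop s z) - m.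
      by rewrite /r addrAC.
    by apply: cvgB => //; apply: cvg_cst.
  by apply: (lim_ge nt) => n; apply: dle.
have r0 : r = 0 by apply: (ode hs) => z; exact: orth.
exists zs.
have -> : w = m by apply/eqP; rewrite -subr_eq0 -/r r0.
exact: vm.
Qed.

Lemma iotaQ_DD z : ipQ (iotaQ (D z)) (iotaQ z) = 0.
Proof.
have h := iotaQ_skew z z; rewrite (ipC ipQ_inner (iotaQ z)) in h; lra.
Qed.

Lemma LopN_norm z : `|Lop (-1) z| ^+ 2 = `|iotaQ (D z)| ^+ 2 + `|iotaQ z| ^+ 2.
Proof.
rewrite /Lop scaleN1r (linB iotaQ_lin) (normB2 ipQ_inner) iotaQ_DD; ring.
Qed.

Lemma sq_le (a b : R) : 0 <= a -> 0 <= b -> a ^+ 2 <= b ^+ 2 -> a <= b.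
Proof. move=> a0 b0; rewrite !expr2 => h; nra. Qed.

Lemma iota_le_Lop z : `|iotaQ z| <= `|Lop (-1) z|.
Proof. by apply: sq_le => //; rewrite LopN_norm lerDr sqr_ge0. Qed.

Lemma iotaD_le_Lop z : `|iotaQ (D z)| <= `|Lop (-1) z|.
Proof. by apply: sq_le => //; rewrite LopN_norm lerDl sqr_ge0. Qed.

Lemma cauchy_dom (T1 : normedModType R) (T3 : completeNormedModType R)
  (f : nat -> T1) (g : nat -> T3) (l : T1) :
  f @ \oo --> l -> (forall n m, `|g n - g m| <= `|f n - f m|) -> cvg (g @ \oo).
Proof.
move=> fl hle; apply: cauchy_seq => e e0.
have [N hN] := cvg_cauchy_seq fl e0.
by exists N => n m Nn Nm; apply: le_lt_trans (hle n m) (hN n m Nn Nm).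
Qed.

Lemma b_part x : closed_graph iotaQ iotaQ D (eta x, iotaQ x).
Proof.
have hip := ipQ_inner.
have [zs hz] := approx (or_intror erefl) (iotaQ x - eta x).
pose a n := iotaQ (zs n); pose b n := iotaQ (D (zs n)).
have Ldiff n m : Lop (-1) (zs n) - Lop (-1) (zs m) = Lop (-1) (zs n - zs m).
  by rewrite (linB (Lop_lin (-1))).
have ca : cvg (a @ \oo).
  apply: (cauchy_dom hz) => n m.
  by rewrite Ldiff /a -(linB iotaQ_lin) iota_le_Lop.
have cb : cvg (b @ \oo).
  apply: (cauchy_dom hz) => n m.
  by rewrite Ldiff /b -(linB iotaQ_lin) -(linB D_lin) iotaD_le_Lop.
set u := lim (a @ \oo); set v := lim (b @ \oo).
have au : a @ \oo --> u by exact: ca.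
have bv : b @ \oo --> v by exact: cb.
have cl : closed_graph iotaQ iotaQ D (u, v).
  apply: (@seq_closure _ _ (fun n => (a n, b n))).
    by move=> n; exists (zs n).
  exact: cvg_pair.
have vu : v - u = iotaQ x - eta x.
  have h : (fun n => b n - a n) @ \oo --> v - u by apply: cvgB.
  have ee : (fun n => b n - a n) = fun n => Lop (-1) (zs n).
    by apply/funext => n; rewrite /Lop scaleN1r (linB iotaQ_lin).
  rewrite ee in h; exact: (cvg_unique _ h hz).
have sk y : ipQ v (iotaQ y) = - ipQ u (iotaQ (D y)).
  have h1 : (fun n => ipQ (b n) (iotaQ y)) @ \oo --> ipQ v (iotaQ y).
    by apply: (cvg_ip hip) => //; apply: cvg_cst.
  have h2 : (fun n => ipQ (b n) (iotaQ y)) @ \oo --> - ipQ u (iotaQ (D y)).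
    have -> : (fun n => ipQ (b n) (iotaQ y)) = fun n => - ipQ (a n) (iotaQ (D y)).
      by apply/funext => n; rewrite /a /b iotaQ_skew.
    by apply: cvgN; apply: (cvg_ip hip) => //; apply: cvg_cst.
  exact: (cvg_unique _ h1 h2).
set e := u - eta x.
have ev : v - iotaQ x = e.
  by rewrite /e; apply/eqP; rewrite -subr_eq0 subrACA' vu subrr.
have e0 : e = 0.
  apply: (@ode 1 (or_introl erefl)) => y.
  rewrite /Lop scale1r (linD iotaQ_lin) (ipDr hip).
  have h1 : ipQ e (iotaQ y) = - ipQ e (iotaQ (D y)).
    rewrite -{1}ev (ipBl hip) sk /e (ipBl hip).
    have := eta_skew x y; lra.
  lra.
have ue : u = eta x by apply/eqP; rewrite -subr_eq0 -/e e0.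
have vx : v = iotaQ x by apply/eqP; rewrite -subr_eq0 ev e0.
by rewrite -ue -vx.
Qed.

Lemma graph_rel (T : completeNormedModType R) (ip : T -> T -> R) (io : V -> T) :
  inner_product ip ->
  (forall x y, ip (io (D x)) (io y) = - ip (io x) (io (D y))) ->
  forall p, closed_graph io io D p -> forall y, ip p.2 (io y) = - ip p.1 (io (D y)).
Proof.
move=> hip hsk p /closure_seq [u [hu up]] y.
have h1 : (fun n => ip (u n).2 (io y)) @ \oo --> ip p.2 (io y).
  by apply: (cvg_ip hip); [apply: cvg_snd_seq | apply: cvg_cst].
have h2 : (fun n => ip (u n).2 (io y)) @ \oo --> - ip p.1 (io (D y)).
  have -> : (fun n => ip (u n).2 (io y)) = fun n => - ip (u n).1 (io (D y)).
    by apply/funext => n; have [x _ <-] := hu n; rewrite /= hsk.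
  by apply: cvgN; apply: (cvg_ip hip); [apply: cvg_fst_seq | apply: cvg_cst].
exact: (cvg_unique _ h1 h2).
Qed.

Lemma graph_is_graph (T : completeNormedModType R) (ip : T -> T -> R) (io : V -> T) :
  inner_product ip -> closure (range io) = setT ->
  (forall x y, ip (io (D x)) (io y) = - ip (io x) (io (D y))) ->
  is_graph (closed_graph io io D).
Proof.
move=> hip hd hsk a b c hb hc.
apply/eqP; rewrite -subr_eq0; apply/eqP; apply: (dense_orth hip hd) => y.
by rewrite (ipBl hip) (graph_rel hip hsk hb) (graph_rel hip hsk hc) /= subrr.
Qed.

Lemma iotak_skew x y : ipk (iotak (D x)) (iotak y) = - ipk (iotak x) (iotak (D y)).
Proof.
rewrite !ipk_iota !etaD (ipC ipQ_inner) !Heta; exact: omega_anti.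
Qed.

Lemma eta_iso x y : `|eta x - eta y| = `|iotak x - iotak y|.
Proof. by rewrite -(linB eta_lin) -(linB iotak_lin) iotak_norm. Qed.

Lemma cvg0_norm_eq (T1 T2 : normedModType R) (f : nat -> T1) (g : nat -> T2) :
  (forall n, `|f n| = `|g n|) -> g @ \oo --> 0 -> f @ \oo --> 0.
Proof.
move=> he /cvgrPdist_lt hg; apply/cvgrPdist_lt => e e0.
by apply: filterS (hg e e0) => n; rewrite !sub0r !normrN he.
Qed.

Lemma dens_seq (T : normedModType R) (io : V -> T) : closure (range io) = setT ->
  forall u : T, exists xs : nat -> V, (fun n => io (xs n)) @ \oo --> u.
Proof.
move=> hd u; have : closure (range io) u by rewrite hd.
move=> /closure_seq [v [hv vu]].
have : forall n, exists x, io x = v n by move=> n; have [x _ <-] := hv n; exists x.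
move=> /choice [xs hxs]; exists xs.
by have -> : (fun n => io (xs n)) = v by apply/funext => n; rewrite hxs.
Qed.

Lemma etah_exists : exists etah : Hk -> HQ,
  forall u (xs : nat -> V), (fun n => iotak (xs n)) @ \oo --> u ->
    (fun n => eta (xs n)) @ \oo --> etah u.
Proof.
have := dens_seq iotak_dense => /choice [sel hsel].
have cv u : cvg ((fun n => eta (sel u n)) @ \oo).
  apply: (cauchy_dom (hsel u)) => n m; by rewrite eta_iso.
exists (fun u => lim ((fun n => eta (sel u n)) @ \oo)) => u xs hxs.
have h0 : (fun n => eta (xs n) - eta (sel u n)) @ \oo --> 0.
  apply: (@cvg0_norm_eq _ _ _ (fun n => iotak (xs n) - iotak (sel u n))).
    by move=> n; rewrite eta_iso.
  by rewrite -(subrr u); apply: cvgB.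
have h1 := cvgD h0 (cv u); rewrite add0r in h1.
have e : (fun n => eta (xs n) - eta (sel u n)) + (fun n => eta (sel u n)) =
  (fun n => eta (xs n)) by apply/funext => n /=; rewrite subrK.
rewrite e in h1; exact: h1.
Qed.

Section Etah.
Variable etah : Hk -> HQ.
Hypothesis hconv : forall u (xs : nat -> V), (fun n => iotak (xs n)) @ \oo --> u ->
    (fun n => eta (xs n)) @ \oo --> etah u.

Lemma etah_iota x : etah (iotak x) = eta x.
Proof.
have h1 : (fun n : nat => iotak x) @ \oo --> iotak x by apply: cvg_cst.
have h := hconv h1.
have h2 : (fun n : nat => eta x) @ \oo --> eta x by apply: cvg_cst.
exact: (cvg_unique _ h h2).
Qed.

Lemma etah_lin a u v : etah (a *: u + v) = a *: etah u + etah v.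
Proof.
have [xs hx] := dens_seq iotak_dense u.
have [ys hy] := dens_seq iotak_dense v.
have h1 : (fun n => iotak (a *: xs n + ys n)) @ \oo --> a *: u + v.
  have -> : (fun n => iotak (a *: xs n + ys n)) = fun n => a *: iotak (xs n) + iotak (ys n).
    by apply/funext => n; rewrite iotak_lin.
  by apply: cvgD => //; apply: cvgZ => //; apply: cvg_cst.
have h2 := hconv h1.
have h3 : (fun n => eta (a *: xs n + ys n)) @ \oo --> a *: etah u + etah v.
  have -> : (fun n => eta (a *: xs n + ys n)) = fun n => a *: eta (xs n) + eta (ys n).
    by apply/funext => n; rewrite eta_lin.
  by apply: cvgD; [apply: cvgZ; [apply: cvg_cst | apply: hconv] | apply: hconv].
exact: (cvg_unique _ h2 h3).
Qed.

Lemma etah_ip u v : ipQ (etah u) (etah v) = ipk u v.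
Proof.
have [xs hx] := dens_seq iotak_dense u.
have [ys hy] := dens_seq iotak_dense v.
have h1 : (fun n => ipQ (eta (xs n)) (eta (ys n))) @ \oo --> ipQ (etah u) (etah v).
  by apply: (cvg_ip ipQ_inner); apply: hconv.
have h2 : (fun n => ipQ (eta (xs n)) (eta (ys n))) @ \oo --> ipk u v.
  have -> : (fun n => ipQ (eta (xs n)) (eta (ys n))) = fun n => ipk (iotak (xs n)) (iotak (ys n)).
    by apply/funext => n; rewrite ipk_iota.
  exact: (cvg_ip ipk_inner).
exact: (cvg_unique _ h1 h2).
Qed.

Lemma etah_norm u : `|etah u| = `|u|.
Proof.
have h : `|etah u| ^+ 2 = `|u| ^+ 2 by rewrite -(ipxx ipQ_inner) -(ipxx ipk_inner) etah_ip.
by apply/eqP; rewrite -(eqrXn2 (n:=2)) // h.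
Qed.

Lemma etahB u v : etah (u - v) = etah u - etah v.
Proof. exact: (linB etah_lin). Qed.

Lemma etah_inj : injective etah.
Proof.
move=> u v e; apply/eqP; rewrite -subr_eq0 -normr_eq0 -etah_norm etahB e subrr normr0 //.
Qed.

Lemma etah_surj w : exists u, etah u = w.
Proof.
have [ys hy] := dens_seq iotaQ_dense w.
have hx : (fun n => eta (D (ys n))) @ \oo --> w.
  by have -> : (fun n => eta (D (ys n))) = (fun n => iotaQ (ys n)) by apply/funext => n; rewrite etaD.
have cv : cvg ((fun n => iotak (D (ys n))) @ \oo).
  by apply: (cauchy_dom hx) => n m; rewrite eta_iso.
exists (lim ((fun n => iotak (D (ys n))) @ \oo)).
exact: (cvg_unique _ (hconv cv) hx).
Qed.

Lemma etah_bij : bijective etah.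
Proof.
have := etah_surj => /choice [g hg].
by exists g => [u|w]; [apply: etah_inj; rewrite hg | exact: hg].
Qed.

Lemma iotakD_dense : closure (range (fun y => iotak (D y))) = setT.
Proof.
rewrite predeqE => w; split => // _.
have [ys hy] := dens_seq iotaQ_dense (etah w).
apply: (@seq_closure _ _ (fun n => iotak (D (ys n)))); first by move=> n; exists (ys n).
apply/cvgrPdist_lt => e e0.
move/cvgrPdist_lt : hy => /(_ e e0); apply: filterS => n.
by rewrite -etah_norm etahB etah_iota etaD.
Qed.

End Etah.

End Main.


Unset Implicit Arguments.

Theorem lemma3p10 (R : realType) (V : tvsType R) (omega : V -> V -> R)
  (gamma : R -> V -> V) (D : V -> V)
  (Homega : symplectic_form omega)
  (Hgamma : smooth_symplectic_action omega gamma)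
  (HD : is_generator gamma D)
  (* (C1) Q is positive definite *)
  (C1 : forall x : V, x != 0 -> 0 < Qform omega D x x)
  (* (C2) all omega(x, .) are Q-continuous *)
  (C2 : forall x : V, Q_continuous (Qform omega D) (omega x))
  (* V_Q : Hilbert completion of (V, Q), containing V via iotaQ *)
  (HQ : completeNormedModType R) (ipQ : HQ -> HQ -> R) (iotaQ : V -> HQ)
  (HVQ : hilbert_completion (Qform omega D) ipQ iotaQ)
  (* (C3) eta : V -> V_Q with Q(eta x, y) = omega(x, y) is continuous *)
  (eta : V -> HQ)
  (Heta : forall x y : V, ipQ (eta x) (iotaQ y) = omega x y)
  (C3 : continuous eta)
  (* V_kappa : Hilbert completion of (V, kappa), kappa(x,y) = Q(eta x, eta y) *)
  (Hk : completeNormedModType R) (ipk : Hk -> Hk -> R) (iotak : V -> Hk)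
  (HVk : hilbert_completion (kappa ipQ eta) ipk iotak) :
  let DbarQ := closed_graph iotaQ iotaQ D in
  let Dbark := closed_graph iotak iotak D in
  [/\ (* D is closable in V_Q, eta(V) lies in dom(Dbar) and Dbar (eta x) = x *)
      is_graph DbarQ,
      (forall x : V, DbarQ (eta x, iotaQ x)),
      (* eta : (V, kappa) -> (eta(V), Q) is isometric *)
      (forall x y : V, ipQ (eta x) (eta y) = kappa ipQ eta x y),
      (* eta extends to an isomorphism of real Hilbert spaces V_kappa -> V_Q,
         and intertwines D on V_kappa with Dbar restricted to eta(V) *)
      (exists etah : Hk -> HQ,
         [/\ (forall a u v, etah (a *: u + v) = a *: etah u + etah v),
             bijective etah,
             (forall u v, ipQ (etah u) (etah v) = ipk u v),
             (forall x : V, etah (iotak x) = eta x)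
           & (forall x : V, DbarQ (etah (iotak x), etah (iotak (D x))))])
    & (* the closure of D in V_kappa is an injective operator with dense range *)
      [/\ is_graph Dbark,
          (forall a : Hk, Dbark (a, 0) -> a = 0)
        & closure (op_range Dbark) = setT]].
Proof.
move=> DbarQ Dbark.
have hipQ : inner_product ipQ by case: HVQ.
have hipk : inner_product ipk by case: HVk.
have dQ : closure (range iotaQ) = setT by case: HVQ.
have dk : closure (range iotak) = setT by case: HVk.
have [etah hconv] : exists etah : Hk -> HQ,
  forall u (xs : nat -> V), (fun n => iotak (xs n)) @ \oo --> u ->
    (fun n => eta (xs n)) @ \oo --> etah u.
  exact: (etah_exists Homega HVQ Heta HVk).
have skQ : forall x y, ipQ (iotaQ (D x)) (iotaQ y) = - ipQ (iotaQ x) (iotaQ (D y)).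
  by move=> x y; apply: (iotaQ_skew Homega HVQ).
have skk : forall x y, ipk (iotak (D x)) (iotak y) = - ipk (iotak x) (iotak (D y)).
  by move=> x y; apply: (iotak_skew Homega HVQ Heta HVk).
have bp : forall x, DbarQ (eta x, iotaQ x).
  by move=> x; apply: (b_part Homega Hgamma HD HVQ Heta).
have dD := iotakD_dense Homega HVQ Heta HVk hconv.
split => //.
- exact: (graph_is_graph hipQ dQ skQ).
- exists etah; split.
  + exact: (etah_lin Homega HVQ Heta HVk hconv).
  + exact: (etah_bij Homega HVQ Heta HVk hconv).
  + exact: (etah_ip HVQ HVk hconv).
  + exact: (etah_iota hconv).
  + move=> x; rewrite (etah_iota hconv).
    rewrite (etah_iota hconv) (etaD HVQ Heta).
    exact: bp.
- split.
  + exact: (graph_is_graph hipk dk skk).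
  + move=> a ha; apply: (dense_orth hipk dD) => y.
    have := graph_rel hipk skk ha y; rewrite /= (ip0l hipk) => h.
    by apply/eqP; rewrite -oppr_eq0 -h.
  + rewrite predeqE => w; split => // _.
    have : closure (range (fun y => iotak (D y))) w by rewrite dD.
    apply: closureS => _ [y _ <-].
    exists (iotak y); apply: subset_closure; exists y => //.
Qed.
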